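(* Let $m\ge1$ and let $j\colon K_m\to\mathbb Z^{2m-1}$ be $j(f,0)=(f(-m+1),\dots,f(m-1))$. Then for all $x,y\in K_m$, $$d(x,y)-4(m-1)\ \le\ d_1(j(x),j(y))\ \le\ d(x,y),$$ where $d$ is the word metric of $\mathbb Z\wr\mathbb Z$ and $d_1$ is the $\ell^1$ metric on $\mathbb Z^{2m-1}$.
   Context: The lamplighter group $\mathbb Z\wr\mathbb Z$ consists of pairs $(f,n)$ with $f\colon\mathbb Z\to\mathbb Z$ finitely supported and $n\in\mathbb Z$, with product $(f,n)(g,n')=(f+g(\cdot-n),\,n+n')$; it is equipped with the left-invariant word metric $d$ for the generators $a=(\delta_0,0)$ and $t=(0,1)$. $K=\{(f,0)\}$ and $K_m=\{(f,0):\operatorname{supp}f\subseteq\{-m+1,\dots,m-1\}\}$, with the metric restricted from $d$. *)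

(* Defs.v *)
From HB Require Import structures.
From mathcomp Require Import all_boot all_order all_algebra.
From mathcomp Require Import finmap.
From Stdlib Require Import ClassicalEpsilon.
Set Implicit Arguments. Unset Strict Implicit. Unset Printing Implicit Defensive.
Import Order.TTheory GRing.Theory Num.Theory.
Local Open Scope ring_scope.

(* Elements (f, n) of the lamplighter group Z wr Z:
   f : Z -> Z finitely supported (default value 0), n : Z. *)
Definition LL := ({fsfun int -> int with 0%R} * int)%type.

(* Generators and their inverses: (false,false) = a, (false,true) = a^-1,
   (true,false) = t, (true,true) = t^-1. *)
Definition gen := (bool * bool)%type.

(* Right multiplication x * s by a generator s, using the product
   (f,n)(g,n') = (f + g(. - n), n + n') with a = (delta_0, 0), t = (0, 1). *)
Definition act (x : LL) (s : gen) : LL :=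
  let: (f, n) := x in
  match s with
  | (false, false) => ([fsfun f with n |-> f n + 1], n)
  | (false, true)  => ([fsfun f with n |-> f n - 1], n)
  | (true, false)  => (f, n + 1)
  | (true, true)   => (f, n - 1)
  end.

Definition reach (x y : LL) (k : nat) : bool :=
  [exists w : k.-tuple gen, foldl act x w == y].

(* Left-invariant word metric: d(x,y) = |x^-1 y| = least length of a word w
   with x * w = y.  (The fallback value 0 is never used since a, t generate.) *)
Definition wdist (x y : LL) : nat :=
  match excluded_middle_informative (exists k, reach x y k) with
  | left H => ex_minn H
  | right _ => 0%N
  end.

Definition inKm (m : nat) (x : LL) : Prop :=
  x.2 = 0 /\ forall i : int, x.1 i != 0 -> (- (m%:Z) < i < m%:Z).

Definition jmap (m : nat) (x : LL) : 'rV[int]_(2 * m - 1) :=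
  \row_(i < 2 * m - 1) x.1 ((i : nat)%:Z - (m%:Z - 1)).

Definition d1 (k : nat) (u v : 'rV[int]_k) : int :=
  \sum_(i < k) `|u 0 i - v 0 i|.

(* Main.v *)
Require Import Defs.
From mathcomp Require Import all_boot all_order all_algebra.
From mathcomp Require Import finmap zify.
From Stdlib Require Import ClassicalEpsilon.
Import Order.TTheory GRing.Theory Num.Theory.
Local Open Scope ring_scope.

Lemma nseqa h n k b :
  (foldl act (h, n) (nseq k (false, b))).2 = n /\
  forall j, (foldl act (h, n) (nseq k (false, b))).1 j =
    h j + (if j == n then (if b then - (k%:Z) else k%:Z) else 0).
Proof.
elim: k h => [|k IH] h /=; first by split => // j; case: ifP => _; case: b; lia.
case: b IH => IH /=.
  case: (IH [fsfun h with n |-> h n - 1]) => E H; split => // j; rewrite H fsfun_withE;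
  case: eqP => [->|_]; lia.
case: (IH [fsfun h with n |-> h n + 1]) => E H; split => // j; rewrite H fsfun_withE;
case: eqP => [->|_]; lia.
Qed.

Definition adj (c : int) : seq gen := nseq (absz c) (false, c < 0).

Lemma adjP h n c :
  (foldl act (h, n) (adj c)).2 = n /\
  forall j, (foldl act (h, n) (adj c)).1 j = h j + (if j == n then c else 0).
Proof.
have [-> H] := nseqa h n (absz c) (c < 0); split => // j; rewrite H.
case: eqP => // _; case: ltP => Hc; lia.
Qed.

Lemma tnP h n k b :
  foldl act (h, n) (nseq k (true, b)) = (h, if b then n - k%:Z else n + k%:Z).
Proof.
elim: k n => [|k IH] n /=; first by case: b; rewrite ?subr0 ?addr0.
case: b IH => IH /=; rewrite IH; congr (_, _); lia.
Qed.

Fixpoint sw (e : nat -> int) (k : nat) : seq gen :=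
  match k with
  | 0%N => adj (e 0%N)
  | k'.+1 => sw e k' ++ (true, false) :: adj (e k)
  end.

Lemma size_sw e k : size (sw e k) = (k + \sum_(i < k.+1) absz (e i))%N.
Proof.
elim: k => [|k IH] /=; first by rewrite big_ord_recr big_ord0 /adj size_nseq.
rewrite size_cat /= /adj size_nseq IH [in RHS]big_ord_recr /=.
by rewrite addnS addSn addnA.
Qed.

Lemma swP h p e k :
  (foldl act (h, p) (sw e k)).2 = p + k%:Z /\
  forall j, (foldl act (h, p) (sw e k)).1 j =
    h j + (if (p <= j) && (j <= p + k%:Z) then e (absz (j - p)) else 0).
Proof.
elim: k => [|k [E H]] /=.
  have [E H] := adjP h p (e 0%N); split; first by rewrite E addr0.
  move=> j; rewrite H; case: eqP => [->|Hj]; first by rewrite lexx addr0 lexx subrr.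
  have -> : (p <= j) && (j <= p + 0) = false by apply/negbTE/negP => /andP[]; lia.
  by [].
rewrite foldl_cat; case: (foldl act (h, p) (sw e k)) E H => z1 z2 /= -> H /=.
have [E2 H2] := adjP z1 (p + k%:Z + 1) (e k.+1).
split; first by rewrite E2; lia.
move=> j; rewrite H2 H.
case: eqP => [->|Hj].
  have -> : (p <= p + k%:Z + 1) && (p + k%:Z + 1 <= p + k.+1%:Z) by apply/andP; split; lia.
  have -> : (p <= p + k%:Z + 1) && (p + k%:Z + 1 <= p + k%:Z) = false by apply/negbTE/negP => /andP[]; lia.
  have -> : absz (p + k%:Z + 1 - p)%R = k.+1 by lia.
  by rewrite addr0.
rewrite addr0; congr (_ + _).
have -> : (p <= j) && (j <= p + k.+1%:Z) = (p <= j) && (j <= p + k%:Z).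
  by apply/idP/idP => /andP[A B]; apply/andP; split => //; lia.
by [].
Qed.

Lemma sum_ind k (q : 'I_k -> int) (n : int) :
  injective q -> \sum_(i < k) (if q i == n then 1 else 0 : int) <= 1.
Proof.
move=> qi; case: (pickP (fun i => q i == n)) => [i0 Hi0 | Hno].
  rewrite (bigD1 i0) //= Hi0 big1 ?addr0 // => i Hi.
  case: eqP => // E; move/eqP: Hi0 => E0.
  by move: Hi; rewrite (qi _ _ (etrans E (esym E0))) eqxx.
by rewrite big1 // => i _; rewrite Hno.
Qed.

Lemma d1_step m (u : 'rV[int]_(2 * m - 1)) z s :
  d1 u (jmap m (act z s)) <= d1 u (jmap m z) + 1.
Proof.
rewrite /d1; case: z => h n.
apply: le_trans (_ : \sum_(i < 2 * m - 1) (`|u 0 i - jmap m (h, n) 0 i| +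
   `|jmap m (h, n) 0 i - jmap m (act (h, n) s) 0 i|) <= _).
  by apply: ler_sum => i _; apply: ler_distD.
rewrite big_split lerD2l /=.
case: s => [[] []] /=; rewrite /jmap.
- by rewrite big1 // => i _; rewrite !mxE subrr normr0.
- by rewrite big1 // => i _; rewrite !mxE subrr normr0.
- have qi : injective (fun i : 'I_(2 * m - 1) => (i : nat)%:Z - (m%:Z - 1)).
    by move=> i j /= E; apply: val_inj => /=; lia.
  apply: le_trans (@sum_ind _ _ n qi).
  apply: ler_sum => i _; rewrite !mxE /= fsfun_withE; case: eqP => [->|_]; lia.
- have qi : injective (fun i : 'I_(2 * m - 1) => (i : nat)%:Z - (m%:Z - 1)).
    by move=> i j /= E; apply: val_inj => /=; lia.
  apply: le_trans (@sum_ind _ _ n qi).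
  apply: ler_sum => i _; rewrite !mxE /= fsfun_withE; case: eqP => [->|_]; lia.
Qed.

Lemma d1_walk m (u : 'rV[int]_(2 * m - 1)) w z :
  d1 u (jmap m (foldl act z w)) <= d1 u (jmap m z) + (size w)%:Z.
Proof.
elim: w z => [|s w IH] z /=; first by rewrite addr0.
apply: le_trans (IH _) _; have := @d1_step m u z s; lia.
Qed.

Lemma d1_self k (u : 'rV[int]_k) : d1 u u = 0.
Proof. by rewrite /d1 big1 // => i _; rewrite subrr normr0. Qed.

Lemma wdist_spec x y k : reach x y k ->
  reach x y (wdist x y) /\ (wdist x y <= k)%N.
Proof.
move=> Hk; rewrite /wdist; case: excluded_middle_informative => [H|[]]; last by exists k.
by case: ex_minnP => n Hn Hmin; split => //; apply: Hmin.
Qed.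

Lemma reach_word x w : reach x (foldl act x w) (size w).
Proof. by apply/existsP; exists (in_tuple w). Qed.

Lemma sum_ord_cast n1 n2 (F : nat -> int) :
  n1 = n2 -> \sum_(i < n1) F i = \sum_(i < n2) F i.
Proof. by move->. Qed.

Theorem lemma4p2p4 (m : nat) (x y : LL) :
  (1 <= m)%N -> inKm m x -> inKm m y ->
  (wdist x y)%:Z - 4 * (m%:Z - 1) <= d1 (jmap m x) (jmap m y) <= (wdist x y)%:Z.
Proof.
case: m => [//|M] _ [x2 xs] [y2 ys].
case: x x2 xs => f n /= -> xs; case: y y2 ys => g n' /= -> ys.
pose e (i : nat) := g (i%:Z - M%:Z) - f (i%:Z - M%:Z).
pose w := nseq M (true, true) ++ sw e (2 * M) ++ nseq M (true, true).
have Ew : foldl act (f, 0) w = (g, 0).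
  rewrite /w !foldl_cat tnP.
  have [E H] := swP f (0 - M%:Z) e (2 * M).
  case: (foldl act (f, 0 - M%:Z) (sw e (2 * M))) E H => h p /= -> H.
  rewrite tnP; congr (_, _); last by lia.
  apply/fsfunP => j; rewrite H.
  case: ifP => Hj.
    rewrite /e; have -> : ((absz (j - (0 - M%:Z))%R)%:Z - M%:Z) = j.
      by move/andP: Hj => [A B]; lia.
    by rewrite addrC subrK.
  have fj : f j = 0.
    by apply/eqP; apply/negP => /negP /xs; move/negbT: Hj => Hj HH; move: Hj; rewrite negb_and; lia.
  have gj : g j = 0.
    by apply/eqP; apply/negP => /negP /ys; move/negbT: Hj => Hj HH; move: Hj; rewrite negb_and; lia.
  by rewrite fj gj.
have Hd : d1 (jmap M.+1 (f, 0)) (jmap M.+1 (g, 0)) = (\sum_(i < (2 * M).+1) absz (e i))%:Z.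
  rewrite /d1 (big_morph Posz PoszD (erefl 0%:Z)).
  pose F := (fun i : nat => `|f (i%:Z - (M.+1%:Z - 1)) - g (i%:Z - (M.+1%:Z - 1))|).
  rewrite (eq_bigr (fun i : 'I__ => F i)); last by move=> i _; rewrite /jmap !mxE.
  rewrite (@sum_ord_cast _ (2 * M).+1 F); last by lia.
  apply: eq_bigr => i _; rewrite /e /F abszE distrC; congr (`|g _ - f _|); lia.
have Hr := reach_word (f, 0) w; rewrite Ew in Hr.
have [Hwd Hle] := wdist_spec _ _ _ Hr.
have Hsz : size w = (M + (2 * M + \sum_(i < (2 * M).+1) absz (e i)) + M)%N.
  by rewrite /w !size_cat size_sw !size_nseq addnA.
apply/andP; split.
  rewrite Hd; move: Hle; rewrite Hsz; move: (\sum_(i < (2 * M).+1) `|e i|)%N (wdist _ _) => S W; lia.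
case/existsP: Hwd => t /eqP Et.
have := @d1_walk M.+1 (jmap M.+1 (f, 0)) t (f, 0).
by rewrite Et d1_self add0r size_tuple.
Qed.
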